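(* Let $\Sigma$ be a finite relational signature and let $\mathcal{C}$ and $\mathcal{K}$ be non-empty classes of finite $\Sigma$-structures. (a) $\mathcal{C}\cup\mathcal{K}$ is MSO-orderable if, and only if, both $\mathcal{C}$ and $\mathcal{K}$ are MSO-orderable. (b) The class $\mathcal{C}\oplus\mathcal{K}:=\{\mathfrak{A}\oplus\mathfrak{B} : \mathfrak{A}\in\mathcal{C},\ \mathfrak{B}\in\mathcal{K}\}$ is MSO-orderable if, and only if, both $\mathcal{C}$ and $\mathcal{K}$ are MSO-orderable.
   Context: Structures are finite, purely relational (universe may be empty). $\mathfrak{A}\oplus\mathfrak{B}$ denotes the disjoint union of $\mathfrak{A}$ and $\mathfrak{B}$. An MSO-formula $\varphi(x,y;Z_0,\dots,Z_{n-1})$ (two free first-order variables, $n$ free set variables called parameters) defines an order on a class $\mathcal{C}$ of structures if for every non-empty $\mathfrak{A}\in\mathcal{C}$ there are sets $P_0,\dots,P_{n-1}\subseteq A$ such that $\{(a,b) : \mathfrak{A}\models\varphi(a,b;\bar P)\}$ is a linear order on $A$. A class is MSO-orderable if some MSO-formula defines an order on it. *)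

(* Defs.v *)
From HB Require Import structures.
From mathcomp Require Import all_boot.
Set Implicit Arguments. Unset Strict Implicit. Unset Printing Implicit Defensive.

Record signature := Signature { sym : finType; arity : sym -> nat }.

(* Finite Sigma-structure: a (possibly empty) finite universe and, for each
   relation symbol R, the set of (arity R)-tuples in the relation. *)
Record structure (S : signature) := Structure {
  carrier : finType;
  rel : forall R : sym S, pred ((arity R).-tuple carrier) }.

Definition dunion S (A B : structure S) : structure S :=
  @Structure S (carrier A + carrier B)%type
    (fun R t =>
       [exists ta : (arity R).-tuple (carrier A),
          (t == map_tuple inl ta) && rel ta] ||
       [exists tb : (arity R).-tuple (carrier B),
          (t == map_tuple inr tb) && rel tb]).

Inductive formula (S : signature) :=
| FRel (R : sym S) (xs : (arity R).-tuple nat)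
| FEq (i j : nat)
| FIn (i k : nat)
| FNot (f : formula S)
| FAnd (f g : formula S)
| FOr (f g : formula S)
| FEx1 (i : nat) (f : formula S)
| FEx2 (k : nat) (f : formula S).

Definition upd (T : Type) (v : nat -> T) (i : nat) (a : T) : nat -> T :=
  fun j => if j == i then a else v j.

Fixpoint sat S (A : structure S) (v : nat -> carrier A)
    (V : nat -> {set carrier A}) (f : formula S) : Prop :=
  match f with
  | FRel R xs => rel (map_tuple v xs)
  | FEq i j => v i = v j
  | FIn i k => v i \in V k
  | FNot g => ~ sat v V g
  | FAnd g h => sat v V g /\ sat v V h
  | FOr g h => sat v V g \/ sat v V h
  | FEx1 i g => exists a, sat (upd v i a) V g
  | FEx2 k g => exists P, sat v (upd V k P) g
  end.

Fixpoint fv1 S (f : formula S) : seq nat :=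
  match f with
  | FRel _ xs => tval xs
  | FEq i j => [:: i; j]
  | FIn i _ => [:: i]
  | FNot g => fv1 g
  | FAnd g h | FOr g h => fv1 g ++ fv1 h
  | FEx1 i g => filter (fun j => j != i) (fv1 g)
  | FEx2 _ g => fv1 g
  end.

Fixpoint fv2 S (f : formula S) : seq nat :=
  match f with
  | FRel _ _ | FEq _ _ => [::]
  | FIn _ k => [:: k]
  | FNot g => fv2 g
  | FAnd g h | FOr g h => fv2 g ++ fv2 h
  | FEx1 _ g => fv2 g
  | FEx2 k g => filter (fun j => j != k) (fv2 g)
  end.

(* phi(x,y; Z_0..Z_{n-1}) : free FO variables among x = x_0, y = x_1,
   free set variables among X_0..X_{n-1}. *)
Definition has_free_vars S (phi : formula S) (n : nat) : bool :=
  all (fun i => i < 2) (fv1 phi) && all (fun k => k < n) (fv2 phi).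

Definition phi_rel S (A : structure S) (phi : formula S)
    (Ps : seq {set carrier A}) (a b : carrier A) : Prop :=
  sat (fun i => if i == 0 then a else b) (fun k => nth set0 Ps k) phi.

Definition linear_order (T : Type) (r : T -> T -> Prop) : Prop :=
  (forall a, r a a) /\
  (forall a b, r a b -> r b a -> a = b) /\
  (forall a b c, r a b -> r b c -> r a c) /\
  (forall a b, r a b \/ r b a).

Definition sclass S := structure S -> Prop.

Definition defines_order S (phi : formula S) (n : nat) (C : sclass S) : Prop :=
  forall A : structure S, C A -> (exists a : carrier A, True) ->
    exists Ps : seq {set carrier A}, size Ps = n /\
      linear_order (phi_rel phi Ps).

Definition MSO_orderable S (C : sclass S) : Prop :=
  exists (phi : formula S) (n : nat), has_free_vars phi n /\ defines_order phi n C.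

Definition class_union S (C K : sclass S) : sclass S := fun X => C X \/ K X.

Definition class_sum S (C K : sclass S) : sclass S :=
  fun X => exists A B, C A /\ K B /\ X = dunion A B.

(* Main.v *)
From Pilot Require Import Defs.
From HB Require Import structures.
From mathcomp Require Import all_boot.
From Stdlib Require Import Setoid Classical.
From mathcomp Require Import zify.
Set Implicit Arguments. Unset Strict Implicit. Unset Printing Implicit Defensive.

Notation srel := Pilot.Defs.rel.

Definition FF S : formula S := FEx1 0 (FNot (FEq S 0 0)).
Definition TT S : formula S := FNot (FF S).
Lemma sat_FF S (A : structure S) v V : sat (A:=A) v V (FF S) <-> False.
Proof. by split=> //= -[a]; apply. Qed.
Lemma sat_TT S (A : structure S) v V : sat (A:=A) v V (TT S) <-> True.
Proof. by split=> //= _ [a]; apply. Qed.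

Definition nonempty S k : formula S := FEx1 0 (FIn S 0 k).
Lemma sat_nonempty S (A : structure S) v V k :
  sat (A:=A) v V (nonempty S k) <-> exists a, a \in V k.
Proof. by []. Qed.

Definition subf S (memf : nat -> formula S) K :=
  FNot (FEx1 0 (FAnd (FIn S 0 K) (FNot (memf 0)))).

Fixpoint relz S (memf : nat -> formula S) (flag : sym S -> formula S) (sh : nat)
   (f : formula S) : formula S :=
 match f with
 | FRel R xs => if arity R == 0 then flag R else FRel xs
 | FEq i j => FEq S i j
 | FIn i k => FIn S i (k + sh)
 | FNot g => FNot (relz memf flag sh g)
 | FAnd g h => FAnd (relz memf flag sh g) (relz memf flag sh h)
 | FOr g h => FOr (relz memf flag sh g) (relz memf flag sh h)
 | FEx1 i g => FEx1 i (FAnd (memf i) (relz memf flag sh g))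
 | FEx2 k g => FEx2 (k + sh) (FAnd (subf memf (k + sh)) (relz memf flag sh g))
 end.

Lemma upd_same T (v : nat -> T) i a : upd v i a i = a.
Proof. by rewrite /upd eqxx. Qed.
Lemma upd_other T (v : nat -> T) i j a : j != i -> upd v i a j = v j.
Proof. by rewrite /upd => /negbTE ->. Qed.

Lemma relz_sat S (A D : structure S) (e : carrier A -> carrier D)
  (P : pred (carrier D)) memf flag sh c (Wb : nat -> {set carrier D}) :
  injective e ->
  (forall d, P d <-> exists a, d = e a) ->
  (forall i (w : nat -> carrier D) W, (forall k, k < c -> W k = Wb k) ->
       (sat w W (memf i) <-> P (w i))) ->
  (forall R (t : (arity R).-tuple (carrier A)) (w : nat -> carrier D) W, arity R = 0 ->
       (forall k, k < c -> W k = Wb k) -> (sat w W (flag R) <-> srel t)) ->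
  (forall R (t : (arity R).-tuple (carrier A)), 0 < arity R ->
       srel (map_tuple e t) = srel t) ->
  c <= sh ->
  forall f (v : nat -> carrier A) (V : nat -> {set carrier A})
    (w : nat -> carrier D) (W : nat -> {set carrier D}), (forall i, w i = e (v i)) ->
    (forall k, k < c -> W k = Wb k) ->
    (forall k, k \in fv2 f -> W (k + sh) = e @: V k) ->
    (sat w W (relz memf flag sh f) <-> sat v V f).
Proof.
move=> einj HP Hmem Hflag Hrel csh.
elim=> [R xs|i j|i k|g IH|g IHg h IHh|g IHg h IHh|i g IH|k g IH] v V w W Hw Hc Hs /=.
- case: eqP => [a0|/eqP an0].
    by apply: Hflag.
  rewrite /=; have -> : map_tuple w xs = map_tuple e (map_tuple v xs).
    by apply: val_inj; rewrite /= -map_comp; apply: eq_map => x; rewrite Hw.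
  by rewrite Hrel // lt0n.
- by rewrite !Hw; split=> [/einj|->].
- by rewrite Hw Hs ?inE // (mem_imset _ _ einj).
- by rewrite (IH v V w W).
- rewrite (IHg v V w W) // ?(IHh v V w W) // => k kin; apply: Hs;
    by rewrite mem_cat kin ?orbT.
- rewrite (IHg v V w W) // ?(IHh v V w W) // => k kin; apply: Hs;
    by rewrite mem_cat kin ?orbT.
- split=> [[d [/Hmem Pd H]]|[a H]].
  + have := Pd (fun k kc => Hc k kc); rewrite upd_same => /HP [a da]; subst d.
    exists a; apply/(IH (upd v i a) V (upd w i (e a)) W) => //.
    by move=> j; rewrite /upd; case: eqP.
  + exists (e a); split.
      by apply/(Hmem _ _ _ Hc); rewrite upd_same; apply/HP; exists a.
    apply/(IH (upd v i a) V (upd w i (e a)) W) => //.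
    by move=> j; rewrite /upd; case: eqP.
- have Hc' : forall (Q : {set carrier D}) j, j < c -> upd W (k + sh) Q j = Wb j.
    move=> Q j jc; rewrite upd_other ?Hc //.
    by apply: contraTneq jc => ->; rewrite -leqNgt (leq_trans csh) // leq_addl.
  have Hs' : forall (Q : {set carrier A}) j, j \in fv2 g ->
      upd W (k + sh) (e @: Q) (j + sh) = e @: (upd V k Q j).
    move=> Q j jin; rewrite /upd eqn_add2r; case: eqP => // /eqP jk.
    by apply: Hs; rewrite mem_filter jk.
  split=> [[Q [Hsub H]]|[Q H]].
  + exists (e @^-1: Q).
    have QE : Q = e @: (e @^-1: Q).
      apply/setP=> d; apply/idP/idP=> [dQ|/imsetP [a]]; last by rewrite inE => ? ->.
      have : P d.
        have := Hmem 0 (upd w 0 d) _ (Hc' Q); rewrite upd_same => <-.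
        apply: NNPP => nP; apply: Hsub; exists d; split; first by rewrite !upd_same.
        exact: nP.
      by move/HP=> [a da]; rewrite da in dQ *; apply: imset_f; rewrite inE.
    apply/(IH v (upd V k (e @^-1: Q)) w (upd W (k + sh) Q)) => //; first exact: Hc'.
    move=> j jin.
    by have := Hs' (e @^-1: Q) j jin; rewrite -QE.
  + exists (e @: Q); split.
      move=> [d [dQ Hn]]; apply: Hn.
      apply/(Hmem 0 (upd w 0 d) _ (Hc' _)); rewrite upd_same; apply/HP.
      move: dQ; rewrite upd_same upd_same => /imsetP [a _ ->]; by exists a.
    apply/(IH v (upd V k Q) w (upd W (k + sh) (e @: Q))) => //; first exact: Hc'.
    by move=> j jin; apply: Hs'.
Qed.

Lemma relz_fv1 S memf flag sh :
  (forall i x, x \in fv1 (memf i) -> x = i) -> (forall R : sym S, fv1 (flag R) = [::]) ->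
  forall f x, x \in fv1 (relz memf flag sh f) -> x \in fv1 f.
Proof.
move=> Hm Hf; elim=> [R xs|i j|i k|g IH|g IHg h IHh|g IHg h IHh|i g IH|k g IH] x /=.
- by case: eqP => _ //; rewrite Hf.
- by [].
- by [].
- exact: IH.
- by rewrite !mem_cat => /orP [/IHg|/IHh] ->; rewrite ?orbT.
- by rewrite !mem_cat => /orP [/IHg|/IHh] ->; rewrite ?orbT.
- rewrite !mem_filter /= mem_cat => /andP [xi /orP [/Hm xe|/IH ->]].
    by rewrite xe eqxx in xi.
  by rewrite xi.
- rewrite mem_cat => /orP [|/IH] //.
  rewrite mem_filter => /andP [x0 /Hm x0'];
  by rewrite x0' eqxx in x0.
Qed.

Lemma relz_fv2 S memf (flag : sym S -> formula S) sh c :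
  (forall i x, x \in fv2 (memf i) -> x < c) -> (forall R x, x \in fv2 (flag R) -> x < c) ->
  c <= sh ->
  forall f x, x \in fv2 (relz memf flag sh f) -> x < c \/ exists2 k, k \in fv2 f & x = k + sh.
Proof.
move=> Hm Hf csh; elim=> [R xs|i j|i k|g IH|g IHg h IHh|g IHg h IHh|i g IH|k g IH] x /=.
- by case: eqP => _ // /Hf; left.
- by [].
- by rewrite inE => /eqP ->; right; exists k; rewrite ?inE.
- exact: IH.
- rewrite !mem_cat => /orP [/IHg|/IHh] [->|[k kin ->]]; auto; right; exists k => //;
  by rewrite mem_cat kin ?orbT.
- rewrite !mem_cat => /orP [/IHg|/IHh] [->|[k kin ->]]; auto; right; exists k => //;
  by rewrite mem_cat kin ?orbT.
- by rewrite mem_cat => /orP [/Hm ->|/IH]; [left|].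
- rewrite eqxx /= mem_filter mem_cat => /andP [xk /orP [/Hm|/IH]].
  + by left.
  + move=> [xc|[k' kin xe]]; first by left.
    right; exists k' => //; rewrite mem_filter kin andbT.
    by apply: contraNneq xk => e'; rewrite xe e'.
Qed.

Lemma linear_assemble (T : Type) (p : T -> bool) (r1 r2 r : T -> T -> Prop) (Xb : Prop) :
  (forall a, p a -> r1 a a) ->
  (forall a b, p a -> p b -> r1 a b -> r1 b a -> a = b) ->
  (forall a b c, p a -> p b -> p c -> r1 a b -> r1 b c -> r1 a c) ->
  (forall a b, p a -> p b -> r1 a b \/ r1 b a) ->
  (forall a, ~~ p a -> r2 a a) ->
  (forall a b, ~~ p a -> ~~ p b -> r2 a b -> r2 b a -> a = b) ->
  (forall a b c, ~~ p a -> ~~ p b -> ~~ p c -> r2 a b -> r2 b c -> r2 a c) ->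
  (forall a b, ~~ p a -> ~~ p b -> r2 a b \/ r2 b a) ->
  (Xb \/ (forall a, p a) \/ (forall a, ~~ p a)) ->
  (forall a b, r a b <-> (p a /\ ~~ p b /\ Xb) \/ (p a /\ p b /\ r1 a b) \/
                         (~~ p a /\ ~~ p b /\ r2 a b)) ->
  linear_order r.
Proof.
move=> R1 A1 T1 L1 R2 A2 T2 L2 HX Hr.
split; [|split; [|split]].
- move=> a; apply/Hr; case pa: (p a).
    by right; left; split; [|split]; auto.
  by right; right; split; [|split]; rewrite ?pa //; apply: R2; rewrite pa.
- move=> a b /Hr H1 /Hr H2.
  move: H1 H2; case: (boolP (p a)) => pa; case: (boolP (p b)) => pb //=;
  intuition (first [congruence | eauto]).
- move=> a b c /Hr H1 /Hr H2; apply/Hr.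
  move: H1 H2; case: (boolP (p a)) => pa; case: (boolP (p b)) => pb;
  case: (boolP (p c)) => pc //=; intuition (first [congruence | eauto]).
- move=> a b; rewrite !Hr.
  case pa: (p a); case pb: (p b) => /=.
  + by case: (L1 a b pa pb); intuition.
  + case: HX => [X|[H|H]]; [by intuition| by move: (H b); rewrite pb|by move: (H a); rewrite pa].
  + case: HX => [X|[H|H]]; [by intuition| by move: (H a); rewrite pa|by move: (H b); rewrite pb].
  + have pa' : ~~ p a by rewrite pa. have pb' : ~~ p b by rewrite pb.
    by case: (L2 a b pa' pb'); intuition.
Qed.

Lemma transfer (A D : Type) (e : A -> D) (p : D -> bool) (r1 : D -> D -> Prop) (rA : A -> A -> Prop) :
  injective e -> (forall d, p d -> exists a, d = e a) ->
  (forall a b, r1 (e a) (e b) <-> rA a b) -> linear_order rA ->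
  [/\ (forall a, p a -> r1 a a),
      (forall a b, p a -> p b -> r1 a b -> r1 b a -> a = b),
      (forall a b c, p a -> p b -> p c -> r1 a b -> r1 b c -> r1 a c) &
      (forall a b, p a -> p b -> r1 a b \/ r1 b a)].
Proof.
move=> einj Hp Hr [Rf [As [Tr To]]]; split.
- by move=> d /Hp [a ->]; apply/Hr.
- move=> d1 d2 /Hp [a ->] /Hp [b ->] /Hr h1 /Hr h2; congr e; exact: As.
- move=> d1 d2 d3 /Hp [a ->] /Hp [b ->] /Hp [c ->] /Hr h1 /Hr h2; apply/Hr; exact: Tr h1 h2.
- by move=> d1 d2 /Hp [a ->] /Hp [b ->]; rewrite !Hr.
Qed.

Section Comb.
Definition ssz (S : signature) := #|sym S|.
Definition cc (S : signature) := (1 + ssz S + ssz S)%N.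
Definition memL S i : formula S := FIn S i 0.
Definition memR S i : formula S := FNot (FIn S i 0).
Definition flagL S (R : sym S) : formula S := nonempty S (1 + enum_rank R).
Definition flagR S (R : sym S) : formula S := nonempty S (1 + ssz S + enum_rank R).

Definition Comb S (X : formula S) (phi1 : formula S) (n1 : nat) (phi2 : formula S) :=
  FOr (FAnd (FAnd (memL S 0) (memR S 1)) X)
   (FOr (FAnd (FAnd (memL S 0) (memL S 1)) (relz (memL S) (@flagL S) (cc S) phi1))
        (FAnd (FAnd (memR S 0) (memR S 1)) (relz (memR S) (@flagR S) (cc S + n1) phi2))).
End Comb.

Lemma rank_lt (T : finType) (x : T) : enum_rank x < #|T|.
Proof. by case: (enum_rank x). Qed.

Lemma Comb_free S (X : formula S) phi1 n1 phi2 n2 :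
  has_free_vars phi1 n1 -> has_free_vars phi2 n2 -> fv1 X = [::] -> fv2 X = [::] ->
  has_free_vars (Comb X phi1 n1 phi2) (cc S + n1 + n2).
Proof.
move=> /andP [/allP H11 /allP H12] /andP [/allP H21 /allP H22] X1 X2.
have m1 : forall i x, x \in fv1 (memL S i) -> x = i by move=> i x; rewrite inE => /eqP.
have m2 : forall i x, x \in fv1 (memR S i) -> x = i by move=> i x; rewrite inE => /eqP.
have c0 : 0 < cc S by [].
have m1' : forall i x, x \in fv2 (memL S i) -> x < cc S by move=> i x; rewrite inE => /eqP ->.
have m2' : forall i x, x \in fv2 (memR S i) -> x < cc S by move=> i x; rewrite inE => /eqP ->.
have f1 : forall R x, x \in fv2 (@flagL S R) -> x < cc S.
  move=> R x; rewrite inE => /eqP ->; rewrite /cc -addnA ltn_add2l.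
  exact: leq_trans (rank_lt R) (leq_addr _ _).
have f2 : forall R x, x \in fv2 (@flagR S R) -> x < cc S.
  by move=> R x; rewrite inE => /eqP ->; rewrite /cc -!addnA !ltn_add2l rank_lt.
apply/andP; split; apply/allP=> x /=; rewrite ?X1 ?X2 => H.
- have [->|x0] := eqVneq x 0 => //; have [->|x1] := eqVneq x 1 => //.
  move: H; rewrite !(inE, mem_cat) (negbTE x0) (negbTE x1) /=.
  case/orP=> [/(@relz_fv1 S _ (@flagL S) _ m1 (fun R => erefl)) /H11 //|].
  by move/(@relz_fv1 S _ (@flagR S) _ m2 (fun R => erefl)) /H21.
- have [->|x0] := eqVneq x 0 => //.
  have L : forall x, x < cc S -> x < cc S + n1 + n2.
    by move=> y yc; rewrite -addnA ltn_addr.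
  move: H; rewrite !(inE, mem_cat) (negbTE x0) /=.
  case/orP.
    move/(relz_fv2 m1' f1 (leqnn _))=> [/L //|[k /H12 kn ->]].
    by rewrite addnC -addnA ltn_add2l ltn_addr.
  move/(relz_fv2 m2' f2 (leq_addr _ _))=> [/L //|[k /H22 kn ->]].
  by rewrite addnC ltn_add2l.
Qed.

Lemma comb_order S (D A1 A2 : structure S) (e1 : carrier A1 -> carrier D)
  (e2 : carrier A2 -> carrier D) (Wb : nat -> {set carrier D})
  (X : formula S) (Xb : Prop) phi1 n1 phi2 n2
  (Ps1 : seq {set carrier A1}) (Ps2 : seq {set carrier A2}) :
  injective e1 -> injective e2 ->
  (forall d, d \in Wb 0 <-> exists a, d = e1 a) ->
  (forall d, d \notin Wb 0 <-> exists a, d = e2 a) ->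
  (forall R (t : (arity R).-tuple (carrier A1)), 0 < arity R ->
       srel (map_tuple e1 t) = srel t) ->
  (forall R (t : (arity R).-tuple (carrier A2)), 0 < arity R ->
       srel (map_tuple e2 t) = srel t) ->
  (forall R (t : (arity R).-tuple (carrier A1)), arity R = 0 ->
       ((exists d, d \in Wb (1 + enum_rank R)) <-> srel t)) ->
  (forall R (t : (arity R).-tuple (carrier A2)), arity R = 0 ->
       ((exists d, d \in Wb (1 + ssz S + enum_rank R)) <-> srel t)) ->
  (forall k, k < n1 -> Wb (k + cc S) = e1 @: nth set0 Ps1 k) ->
  (forall k, k < n2 -> Wb (k + (cc S + n1)) = e2 @: nth set0 Ps2 k) ->
  linear_order (phi_rel phi1 Ps1) -> linear_order (phi_rel phi2 Ps2) ->
  (forall (w : nat -> carrier D) W, sat w W X <-> Xb) ->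
  (Xb \/ (forall d, d \in Wb 0) \/ (forall d, d \notin Wb 0)) ->
  has_free_vars phi1 n1 -> has_free_vars phi2 n2 ->
  linear_order (phi_rel (Comb X phi1 n1 phi2) (mkseq Wb (cc S + n1 + n2))).
Proof.
move=> i1 i2 HP1 HP2 R1 R2 F1 F2 W1 W2 L1 L2 HX HXb
  /andP [_ /allP H12] /andP [_ /allP H22].
set N := cc S + n1 + n2.
set W := fun k => nth set0 (mkseq Wb N) k.
have WE : forall k, k < N -> W k = Wb k by move=> k kN; rewrite /W nth_mkseq.
have cN : cc S <= N by rewrite /N -addnA leq_addr.
have Wc : forall k, k < cc S -> W k = Wb k.
  by move=> k kc; apply: WE; exact: leq_trans kc cN.
pose vv (T : Type) (a b : T) := fun i : nat => if i == 0 then a else b.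
pose r1 := fun a b => sat (vv _ a b) W (relz (memL S) (@flagL S) (cc S) phi1).
pose r2 := fun a b => sat (vv _ a b) W (relz (memR S) (@flagR S) (cc S + n1) phi2).
have rank1 : forall R : sym S, 1 + enum_rank R < cc S.
  move=> R; rewrite /cc -addnA ltn_add2l.
  exact: leq_trans (rank_lt R) (leq_addr _ _).
have rank2 : forall R : sym S, 1 + ssz S + enum_rank R < cc S.
  by move=> R; rewrite /cc -!addnA !ltn_add2l rank_lt.
have T1 : forall a b, r1 (e1 a) (e1 b) <-> phi_rel phi1 Ps1 a b.
  move=> a b; rewrite /r1 /phi_rel.
  apply: (@relz_sat S A1 D e1 (fun d => d \in Wb 0) _ _ _ (cc S) Wb) => //.
  - move=> i w W' HW; rewrite /= HW //.
  - move=> R t w W' a0 HW; rewrite /= -(F1 R t a0) HW //.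
  - by move=> i; rewrite /vv; case: eqP.
  - move=> k kin; rewrite WE ?W1 ?H12 //.
    by rewrite /N -addnA addnC ltn_add2l ltn_addr ?H12.
have T2 : forall a b, r2 (e2 a) (e2 b) <-> phi_rel phi2 Ps2 a b.
  move=> a b; rewrite /r2 /phi_rel.
  apply: (@relz_sat S A2 D e2 (fun d => d \notin Wb 0) _ _ _ (cc S) Wb) => //.
  - move=> i w W' HW; rewrite /= HW //; split=> [/negP //|/negP //].
  - move=> R t w W' a0 HW; rewrite /= -(F2 R t a0) HW //.
  - exact: leq_addr.
  - by move=> i; rewrite /vv; case: eqP.
  - move=> k kin; rewrite WE ?W2 ?H22 //.
    by rewrite /N addnC ltn_add2l ?H22.
have [A1a A1b A1c A1d] := transfer (p := fun d => d \in Wb 0) i1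
   (fun d pd => proj1 (HP1 d) pd) T1 L1.
have [A2a A2b A2c A2d] := transfer (p := fun d => d \notin Wb 0) i2
   (fun d pd => proj1 (HP2 d) pd) T2 L2.
apply: (linear_assemble (p := fun d => d \in Wb 0) A1a A1b A1c A1d A2a A2b A2c A2d HXb).
move=> a b; rewrite /phi_rel /=.
rewrite HX.
split.
- case=> [[[x y] z]|[[[x y] z]|[[x y] z]]]; [left|right;left|right;right];
   repeat split => //; apply/negP => //.
- case=> [[x [y z]]|[[x [y z]]|[x [y z]]]]; [left|right;left|right;right];
   repeat split => //; apply/negP => //.
Qed.

Lemma tuple_arity0 (T : Type) n (t t' : n.-tuple T) : n = 0 -> t = t'.
Proof. by move=> n0; subst n; rewrite (tuple0 t) (tuple0 t'). Qed.

Definition mkW S (D : finType) (Z : {set D}) (fl1 fl2 : sym S -> bool)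
  (P1 P2 : nat -> {set D}) (n1 : nat) : nat -> {set D} :=
 fun k => if k == 0 then Z
   else if k < 1 + ssz S then
     (if [exists R, (enum_rank R == k - 1 :> nat) && fl1 R] then setT else set0)
   else if k < cc S then
     (if [exists R, (enum_rank R == k - 1 - ssz S :> nat) && fl2 R] then setT else set0)
   else if k < cc S + n1 then P1 (k - cc S) else P2 (k - cc S - n1).

Lemma flag_ex (D : finType) (T : finType) (fl : T -> bool) (R : T) (m : nat) :
  (exists d : D, True) -> m = enum_rank R ->
  (exists d : D, d \in (if [exists R', (enum_rank R' == m :> nat) && fl R'] then [set: D] else set0))
   <-> fl R.
Proof.
move=> [d0 _] ->; case: ifP.
- move=> /existsP [R' /andP [/eqP /val_inj /enum_rank_inj -> ->]]; split=> // _.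
  by exists d0; rewrite inE.
- move=> H; split=> [[d]|fR]; first by rewrite inE.
  by move/negbT: H => /existsPn /(_ R); rewrite eqxx fR.
Qed.

Lemma comb_exists S (D A1 A2 : structure S) (e1 : carrier A1 -> carrier D)
  (e2 : carrier A2 -> carrier D) (X : formula S) (Xb : Prop) phi1 n1 phi2 n2
  (Ps1 : seq {set carrier A1}) (Ps2 : seq {set carrier A2}) :
  (exists d : carrier D, True) ->
  injective e1 -> injective e2 ->
  (forall d, (exists a, d = e1 a) \/ (exists b, d = e2 b)) ->
  (forall a b, e1 a <> e2 b) ->
  (forall R (t : (arity R).-tuple (carrier A1)), 0 < arity R ->
       srel (map_tuple e1 t) = srel t) ->
  (forall R (t : (arity R).-tuple (carrier A2)), 0 < arity R ->
       srel (map_tuple e2 t) = srel t) ->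
  linear_order (phi_rel phi1 Ps1) -> linear_order (phi_rel phi2 Ps2) ->
  (forall (w : nat -> carrier D) W, sat w W X <-> Xb) ->
  (Xb \/ (forall b : carrier A2, False) \/ (forall a : carrier A1, False)) ->
  has_free_vars phi1 n1 -> has_free_vars phi2 n2 ->
  exists Ps : seq {set carrier D}, size Ps = cc S + n1 + n2 /\ linear_order (phi_rel (Comb X phi1 n1 phi2) Ps).
Proof.
move=> Dne i1 i2 cov dis R1 R2 L1 L2 HX HXb hf1 hf2.
set fl1 := fun R : sym S => [exists t : (arity R).-tuple (carrier A1), srel t].
set fl2 := fun R : sym S => [exists t : (arity R).-tuple (carrier A2), srel t].
set Z := e1 @: setT.
set Wb := mkW Z fl1 fl2 (fun k => e1 @: nth set0 Ps1 k) (fun k => e2 @: nth set0 Ps2 k) n1.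
exists (mkseq Wb (cc S + n1 + n2)); split; first by rewrite size_mkseq.
have HZ1 : forall d, d \in Wb 0 <-> exists a, d = e1 a.
  move=> d; rewrite /Wb /mkW /= /Z; split=> [/imsetP [a _ ->]|[a ->]]; first by exists a.
  by apply: imset_f.
have HZ2 : forall d, d \notin Wb 0 <-> exists a, d = e2 a.
  move=> d; split=> [dn|[b ->]].
    case: (cov d) => // [[a da]]; move: dn; rewrite da.
    by move/negP; case; apply/HZ1; exists a.
  by apply/negP => /HZ1 [a /esym /dis].
apply: (comb_order (Xb := Xb) i1 i2 HZ1 HZ2 R1 R2) => //.
- move=> R t a0; rewrite /Wb /mkW /=.
  have -> : 1 + enum_rank R < 1 + ssz S by rewrite ltn_add2l rank_lt.
  rewrite (flag_ex fl1 Dne); last by rewrite /= subn1.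
  rewrite /fl1; split=> [/existsP [t' ]|Ht]; last by apply/existsP; exists t.
  by rewrite (tuple_arity0 t' t a0).
- move=> R t a0; rewrite /Wb /mkW /=.
  have -> : 1 + ssz S + enum_rank R < 1 + ssz S = false.
    by apply/negbTE; rewrite -leqNgt leq_addr.
  have -> : 1 + ssz S + enum_rank R < cc S by rewrite /cc -!addnA !ltn_add2l rank_lt.
  rewrite (flag_ex fl2 Dne); last by rewrite /= -addnA addKn addKn.
  rewrite /fl2; split=> [/existsP [t' ]|Ht]; last by apply/existsP; exists t.
  by rewrite (tuple_arity0 t' t a0).
- move=> k kn; rewrite /Wb /mkW /cc.
  have -> : (k + (1 + ssz S + ssz S) == 0) = false by lia.
  have -> : (k + (1 + ssz S + ssz S) < 1 + ssz S) = false by lia.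
  have -> : (k + (1 + ssz S + ssz S) < 1 + ssz S + ssz S) = false by lia.
  have -> : (k + (1 + ssz S + ssz S) < 1 + ssz S + ssz S + n1) = true by lia.
  by rewrite addnK.
- move=> k kn; rewrite /Wb /mkW /cc.
  have -> : (k + (1 + ssz S + ssz S + n1) == 0) = false by lia.
  have -> : (k + (1 + ssz S + ssz S + n1) < 1 + ssz S) = false by lia.
  have -> : (k + (1 + ssz S + ssz S + n1) < 1 + ssz S + ssz S) = false by lia.
  have -> : (k + (1 + ssz S + ssz S + n1) < 1 + ssz S + ssz S + n1) = false by lia.
  by have -> : k + (1 + ssz S + ssz S + n1) - (1 + ssz S + ssz S) - n1 = k by lia.
- exact: L1.
- exact: L2.
- case: HXb => [|[H|H]]; [by left|right; left|right; right].
  + by move=> d; case: (cov d) => [[a ->]|[b _]]; [apply/HZ1; exists a|case: (H b)].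
  + by move=> d; case: (cov d) => [[a _]|[b ->]]; [case: (H a)|apply/HZ2; exists b].
Qed.

Definition cst S (b : bool) : formula S := if b then TT S else FF S.
Lemma sat_cst S (A : structure S) v V b : sat (A:=A) v V (cst S b) <-> b.
Proof. by case: b; rewrite /cst ?sat_TT ?sat_FF. Qed.

Definition bigor S (l : seq (formula S)) : formula S := foldr (@FOr S) (FF S) l.
Lemma sat_bigor S (A : structure S) v V (T : finType) (F : T -> formula S) :
  sat (A:=A) v V (bigor (map F (enum T))) <-> exists x, sat v V (F x).
Proof.
have : forall s : seq T, sat (A:=A) v V (bigor (map F s)) <-> exists2 x, x \in s & sat v V (F x).
  elim=> [|y s IH] /=; first by split=> [/sat_FF|[x]].
  rewrite IH; split=> [[H|[x xs H]]|[x]]; first by exists y; rewrite ?inE ?eqxx.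
    by exists x; rewrite // inE xs orbT.
  by rewrite inE => /orP [/eqP ->|xs H]; [left|right; exists x].
move=> ->; split=> [[x _ H]|[x H]]; exists x => //; exact: mem_enum.
Qed.

Lemma fv1_bigor S (T : Type) (F : T -> formula S) s x :
  x \in fv1 (bigor (map F s)) -> exists y, x \in fv1 (F y).
Proof.
elim: s => [|y s IH] //= ; rewrite mem_cat => /orP [H|/IH //]; by exists y.
Qed.
Lemma fv2_bigor S (T : Type) (F : T -> formula S) s x :
  x \in fv2 (bigor (map F s)) -> exists y, x \in fv2 (F y).
Proof.
elim: s => [|y s IH] //= ; rewrite mem_cat => /orP [H|/IH //]; by exists y.
Qed.

Fixpoint tau S (B0 : structure S) (sg : nat -> option (carrier B0)) (rh : nat -> {set carrier B0})
    (f : formula S) {struct f} : formula S :=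
 match f with
 | FRel R xs => FOr (if all (fun i => sg i == None) xs then FRel xs else FF S)
      (cst S [exists tb : (arity R).-tuple (carrier B0),
                 (map_tuple Some tb == map_tuple sg xs) && srel tb])
 | FEq i j => match sg i, sg j with
              | None, None => FEq S i j
              | Some b, Some b' => cst S (b == b')
              | _, _ => FF S end
 | FIn i k => match sg i with None => FIn S i k | Some b => cst S (b \in rh k) end
 | FNot g => FNot (tau sg rh g)
 | FAnd g h => FAnd (tau sg rh g) (tau sg rh h)
 | FOr g h => FOr (tau sg rh g) (tau sg rh h)
 | FEx1 i g => FOr (FEx1 i (tau (upd sg i None) rh g))
      (bigor (map (fun b => tau (upd sg i (Some b)) rh g) (enum (carrier B0))))
 | FEx2 k g => FEx2 k (bigor (map (fun P => tau sg (upd rh k P) g) (enum {set carrier B0})))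
 end.

Lemma map_eq_iff (X Y Z : Type) (g : X -> Y) (h : Z -> Y) (g' : X -> option Z) :
  (forall x z, g x = h z <-> g' x = Some z) ->
  forall s t, map g s = map h t <-> map g' s = map Some t.
Proof.
move=> H; elim=> [|x s IH] [|z t] //=; split=> [[e1 e2]|[e1 e2]].
- by rewrite (proj1 (H x z) e1) (proj1 (IH t) e2).
- by rewrite (proj2 (H x z) e1) (proj2 (IH t) e2).
Qed.

Lemma tau_sat S (D A B0 : structure S) (e : carrier A -> carrier D)
  (f : carrier B0 -> carrier D) :
  injective e -> injective f -> (forall a b, e a <> f b) ->
  (forall d, (exists a, d = e a) \/ (exists b, d = f b)) ->
  (forall R (t : (arity R).-tuple (carrier D)), srel t <->
     (exists ta, t = map_tuple e ta /\ srel ta) \/ (exists tb, t = map_tuple f tb /\ srel tb)) ->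
  forall g (sg : nat -> option (carrier B0)) (rh : nat -> {set carrier B0}) (v : nat -> carrier A) (V : nat -> {set carrier A})
    (w : nat -> carrier D) (W : nat -> {set carrier D}),
  (forall i, w i = match sg i with None => e (v i) | Some b => f b end) ->
  (forall k, k \in fv2 g -> (forall a, (e a \in W k) = (a \in V k)) /\
                            (forall b, (f b \in W k) = (b \in rh k))) ->
  (sat w W g <-> sat v V (tau (B0:=B0) sg rh g)).
Proof.
move=> ei fi dis cov Hrel.
elim=> [R xs|i j|i k|g IH|g IHg h IHh|g IHg h IHh|i g IH|k g IH] sg rh v V w W Hw HW /=.
- have Hp : forall x z, w x = f z <-> sg x = Some z.
    move=> x z; rewrite Hw; case: (sg x) => [b|]; last by split=> // /dis.
    by split=> [/fi ->|[->]].
  have H2 : (exists tb, map_tuple w xs = map_tuple f tb /\ srel tb) <->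
      [exists tb : (arity R).-tuple (carrier B0),
                 (map_tuple Some tb == map_tuple sg xs) && srel tb].
    split=> [[tb [/(congr1 val) /= E r]]|/existsP [tb /andP [/eqP /(congr1 val) /= E r]]].
      apply/existsP; exists tb; rewrite r andbT; apply/eqP/val_inj => /=.
      by symmetry; apply/(map_eq_iff Hp).
    by exists tb; split => //; apply/val_inj => /=; apply/(map_eq_iff Hp).
  have H1 : (exists ta, map_tuple w xs = map_tuple e ta /\ srel ta) <->
      sat v V (if all (fun i => sg i == None) xs then FRel xs else FF S).
    case: ifP => Hall.
      have -> : map_tuple w xs = map_tuple e (map_tuple v xs).
        apply/val_inj => /=; rewrite -map_comp; apply/eq_in_map => x /(allP Hall) /eqP sx.
        by rewrite Hw sx.
      split=> [[ta [E r]]|r]; last by exists (map_tuple v xs).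
      rewrite /=; suff -> : map_tuple v xs = ta by [].
      apply/val_inj; move/(congr1 val): E => /=; exact: inj_map.
    rewrite sat_FF; split=> // [[ta [/(congr1 val) /= E _]]].
    move/negbT: Hall => /allPn [x xin]; case sx: (sg x) => [b|] // _.
    have : w x \in map w xs by apply: map_f.
    by rewrite E Hw sx => /mapP [a _ E']; case: (dis a b (esym E')).
  rewrite Hrel sat_cst -H1 -H2; split=> [[]|[]] [t [E r]]; [left|right|left|right];
  exists t; split => //; by rewrite E.
- rewrite !Hw; case: (sg i) => [b|]; case: (sg j) => [b'|];
    rewrite ?sat_cst ?sat_FF.
  + by split=> [/fi ->|/eqP ->].
  + by split=> // H; case: (dis _ _ (esym H)).
  + by split=> // H; case: (dis _ _ H).
  + by split=> [/ei|->].
- have [H1 H2] := HW k (mem_head _ _).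
  by rewrite Hw; case: (sg i) => [b|]; rewrite ?sat_cst /= ?H1 ?H2.
- by rewrite (IH sg rh v V w W).
- rewrite (IHg sg rh v V w W) // ?(IHh sg rh v V w W) // => k kin; apply: HW;
  by rewrite mem_cat kin ?orbT.
- rewrite (IHg sg rh v V w W) // ?(IHh sg rh v V w W) // => k kin; apply: HW;
  by rewrite mem_cat kin ?orbT.
- rewrite sat_bigor; split.
  + move=> [d]; case: (cov d) => [[a ->]|[b ->]] H.
      left; exists a; apply/(IH (upd sg i None) rh (upd v i a) V (upd w i (e a)) W) => //.
      by move=> j; rewrite /upd; case: eqP => // _; apply: Hw.
    right; exists b; apply/(IH (upd sg i (Some b)) rh v V (upd w i (f b)) W) => //.
    by move=> j; rewrite /upd; case: eqP => // _; apply: Hw.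
  + case=> [[a H]|[b H]].
      exists (e a); apply/(IH (upd sg i None) rh (upd v i a) V (upd w i (e a)) W) => //.
      by move=> j; rewrite /upd; case: eqP => // _; apply: Hw.
    exists (f b); apply/(IH (upd sg i (Some b)) rh v V (upd w i (f b)) W) => //.
    by move=> j; rewrite /upd; case: eqP => // _; apply: Hw.
- have HW' : forall (P : {set carrier A}) (Q : {set carrier B0}) (P' : {set carrier D}),
     (forall a, (e a \in P') = (a \in P)) -> (forall b, (f b \in P') = (b \in Q)) ->
     forall k', k' \in fv2 g -> (forall a, (e a \in upd W k P' k') = (a \in upd V k P k')) /\
                (forall b, (f b \in upd W k P' k') = (b \in upd rh k Q k')).
    move=> P Q P' HP HQ k' kin; rewrite /upd; case: eqP => // /eqP kk.
    by apply: HW; rewrite mem_filter kk.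
  split.
  + move=> [P' H]; exists (e @^-1: P'); apply/sat_bigor; exists (f @^-1: P').
    apply/(IH sg (upd rh k (f @^-1: P')) v (upd V k (e @^-1: P')) w (upd W k P')) => //.
    by apply: HW' => ?; rewrite inE.
  + move=> [P /sat_bigor [Q H]]; exists (e @: P :|: f @: Q).
    apply/(IH sg (upd rh k Q) v (upd V k P) w (upd W k (e @: P :|: f @: Q))) => //.
    apply: HW'.
    * move=> a; rewrite inE (mem_imset _ _ ei); case: (a \in P) => //=.
      by apply/negP => /imsetP [b _ E']; case: (dis _ _ E').
    * move=> b; rewrite inE (mem_imset _ _ fi); case: (b \in Q); rewrite ?orbT ?orbF //.
      by apply/negbTE/negP => /imsetP [a _ E']; case: (dis _ _ (esym E')).
Qed.

Lemma fv_cst S b : fv1 (cst S b) = [::] /\ fv2 (cst S b) = [::].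
Proof. by case: b. Qed.

Lemma tau_fv1 S (B0 : structure S) g (sg : nat -> option (carrier B0)) rh x :
  x \in fv1 (tau sg rh g) -> x \in fv1 g /\ sg x = None.
Proof.
elim: g sg rh => [R xs|i j|i k|g IH|g IHg h IHh|g IHg h IHh|i g IH|k g IH] sg rh /=.
- rewrite (proj1 (fv_cst _ _)) cats0; case: ifP => // Hall xin; split=> //.
  by apply/eqP; apply: (allP Hall).
- case si: (sg i) => [b|]; case sj: (sg j) => [b'|]; rewrite ?(proj1 (fv_cst _ _)) //.
  by rewrite !inE => /orP [] /eqP ->; rewrite ?si ?sj /= ?eqxx ?orbT.
- case si: (sg i) => [b|]; rewrite ?(proj1 (fv_cst _ _)) //.
  by rewrite inE => /eqP ->.
- exact: IH.
- by rewrite !mem_cat => /orP [/IHg|/IHh] [-> ->]; rewrite ?orbT.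
- by rewrite !mem_cat => /orP [/IHg|/IHh] [-> ->]; rewrite ?orbT.
- rewrite mem_cat => /orP [|/fv1_bigor [b /IH [xg]]].
    rewrite mem_filter => /andP [xi /IH [xg]]; rewrite mem_filter xi xg.
    by rewrite /upd (negbTE xi).
  rewrite /upd; case: eqP => // /eqP xi sx; by rewrite mem_filter xi xg.
- by move/fv1_bigor => [P /IH].
Qed.

Lemma tau_fv2 S (B0 : structure S) g (sg : nat -> option (carrier B0)) rh x :
  x \in fv2 (tau sg rh g) -> x \in fv2 g.
Proof.
elim: g sg rh => [R xs|i j|i k|g IH|g IHg h IHh|g IHg h IHh|i g IH|k g IH] sg rh /=.
- by rewrite (proj2 (fv_cst _ _)) cats0; case: ifP.
- by case si: (sg i) => [b|]; case sj: (sg j) => [b'|]; rewrite ?(proj2 (fv_cst _ _)).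
- by case si: (sg i) => [b|]; rewrite ?(proj2 (fv_cst _ _)).
- exact: IH.
- by rewrite !mem_cat => /orP [/IHg|/IHh] ->; rewrite ?orbT.
- by rewrite !mem_cat => /orP [/IHg|/IHh] ->; rewrite ?orbT.
- by rewrite mem_cat => /orP [/IH|/fv2_bigor [b /IH]].
- rewrite !mem_filter => /andP [xk /fv2_bigor [P /IH xg]]; by rewrite xk.
Qed.

Definition Sel S (B0 : structure S) (phi : formula S) (n : nat) : formula S :=
  bigor (map (fun t : n.-tuple {set carrier B0} =>
     FAnd (nonempty S (n + enum_rank t))
          (tau (B0:=B0) (fun _ => None) (fun k => nth set0 t k) phi))
     (enum ((n.-tuple {set carrier B0}) : finType))).

Lemma Sel_free S (B0 : structure S) phi n :
  has_free_vars phi n ->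
  has_free_vars (Sel B0 phi n) (n + #|(n.-tuple {set carrier B0} : finType)|).
Proof.
move=> /andP [/allP H1 /allP H2]; apply/andP; split; apply/allP=> x.
- by move/fv1_bigor => [t]; rewrite /= => /tau_fv1 [/H1].
- move/fv2_bigor => [t]; rewrite /= inE => /orP [/eqP ->|/tau_fv2 /H2 xn].
    by rewrite ltn_add2l rank_lt.
  exact: leq_trans xn (leq_addr _ _).
Qed.

Lemma restrict_linear (A D : Type) (e : A -> D) (rA : A -> A -> Prop) (rD : D -> D -> Prop) :
  injective e -> linear_order rD -> (forall a b, rA a b <-> rD (e a) (e b)) ->
  linear_order rA.
Proof.
move=> ei [R1 [R2 [R3 R4]]] H; split; [|split; [|split]].
- by move=> a; apply/H.
- by move=> a b /H h1 /H h2; apply: ei; apply: R2.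
- by move=> a b c /H h1 /H h2; apply/H; apply: R3 h1 h2.
- by move=> a b; rewrite !H.
Qed.

Lemma sum_restrict S (D A B0 : structure S) (e : carrier A -> carrier D)
  (f : carrier B0 -> carrier D) phi n :
  injective e -> injective f -> (forall a b, e a <> f b) ->
  (forall d, (exists a, d = e a) \/ (exists b, d = f b)) ->
  (forall R (t : (arity R).-tuple (carrier D)), srel t <->
     (exists ta, t = map_tuple e ta /\ srel ta) \/ (exists tb, t = map_tuple f tb /\ srel tb)) ->
  has_free_vars phi n -> (exists a : carrier A, True) ->
  forall PsD : seq {set carrier D}, linear_order (phi_rel phi PsD) ->
  exists PsA : seq {set carrier A},
    size PsA = n + #|(n.-tuple {set carrier B0} : finType)| /\
    linear_order (phi_rel (Sel B0 phi n) PsA).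
Proof.
move=> ei fi dis cov Hrel /andP [_ /allP H2] [a0 _] PsD LD.
pose t0 : n.-tuple {set carrier B0} := [tuple f @^-1: nth set0 PsD i | i < n].
pose N := n + #|(n.-tuple {set carrier B0} : finType)|.
pose Wf := fun k => if k < n then e @^-1: nth set0 PsD k
                    else if k - n == enum_rank t0 then [set: carrier A] else set0.
exists (mkseq Wf N); split; first by rewrite size_mkseq.
apply: (restrict_linear ei LD) => a b.
rewrite /phi_rel /Sel sat_bigor.
have HV : forall k, k < N -> nth set0 (mkseq Wf N) k = Wf k.
  by move=> k kN; rewrite nth_mkseq.
have kN : forall t : n.-tuple {set carrier B0}, n + enum_rank t < N.
  by move=> t; rewrite ltn_add2l rank_lt.
have Hflag : forall t : n.-tuple {set carrier B0},
   (exists x, x \in nth set0 (mkseq Wf N) (n + enum_rank t)) <-> t = t0.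
  move=> t; rewrite HV // /Wf ltnNge leq_addr /= addKn.
  case: eqP => [/val_inj /enum_rank_inj ->|ne]; first by split=> // _; exists a0.
  by split=> [[x]|E]; [rewrite inE|case: ne; rewrite E].
have Htau : sat (fun i : nat => if i == 0 then a else b) [eta nth set0 (mkseq Wf N)]
      (tau (B0:=B0) (fun _ => None) (fun k => nth set0 t0 k) phi) <->
    sat (fun i : nat => if i == 0 then e a else e b) [eta nth set0 PsD] phi.
  symmetry; apply: (tau_sat ei fi dis cov Hrel).
    by move=> i; case: eqP.
  move=> k /H2 kn; split=> [a'|b'].
    rewrite HV; last by exact: leq_trans kn (leq_addr _ _).
    by rewrite /Wf kn inE.
  rewrite -[k]/(nat_of_ord (Ordinal kn)) nth_mktuple /= inE //.
split=> [[t /= [/Hflag -> H]] |H].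
  exact/Htau.
by exists t0 => /=; split; [apply/Hflag|apply/Htau].
Qed.

Lemma get_order S (phi : formula S) n (C : sclass S) (A : structure S) :
  defines_order phi n C -> C A ->
  exists Ps : seq {set carrier A}, linear_order (phi_rel phi Ps).
Proof.
move=> Hd CA; case: (pickP (fun _ : carrier A => true)) => [a _|none].
  by have [Ps [_ L]] := Hd A CA (ex_intro _ a I); exists Ps.
exists [::]; split; [|split; [|split]] => x; by have := none x.
Qed.

Definition emptyS S : structure S := @Structure S void (fun R t => false).

Lemma linear_void S (r : carrier (emptyS S) -> carrier (emptyS S) -> Prop) : linear_order r.
Proof. by split; [|split; [|split]] => -[]. Qed.

Lemma emptyS_rel S (D : structure S) (e : carrier (emptyS S) -> carrier D) R
  (t : (arity R).-tuple (carrier (emptyS S))) : 0 < arity R -> srel (map_tuple e t) = srel t.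
Proof. move=> ar; have : 0 < size t by rewrite size_tuple. by case: (tval t) => [|[]]. Qed.

Lemma id_rel S (A : structure S) R (t : (arity R).-tuple (carrier A)) :
  srel (map_tuple id t) = srel t.
Proof. by congr srel; apply/val_inj; rewrite /= map_id. Qed.

Lemma inl_rel S (A B : structure S) R (t : (arity R).-tuple (carrier A)) :
  0 < arity R -> @srel S (dunion A B) R (map_tuple inl t) = srel t.
Proof.
move=> ar; rewrite /=; apply/idP/idP.
- case/orP=> /existsP [t' /andP [/eqP E r]].
    suff -> : t = t' by [].
    by apply/val_inj; move/(congr1 val): E => /=; apply: inj_map => x y [].
  have : 0 < size t by rewrite size_tuple.
  move/(congr1 val): E => /=; case: (tval t) (tval t') => [|x s] [|y s'] //=.
- move=> r; apply/orP; left; apply/existsP; exists t; by rewrite eqxx.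
Qed.

Lemma inr_rel S (A B : structure S) R (t : (arity R).-tuple (carrier B)) :
  0 < arity R -> @srel S (dunion A B) R (map_tuple inr t) = srel t.
Proof.
move=> ar; rewrite /=; apply/idP/idP.
- case/orP=> /existsP [t' /andP [/eqP E r]].
    have : 0 < size t by rewrite size_tuple.
    move/(congr1 val): E => /=; case: (tval t) (tval t') => [|x s] [|y s'] //=.
  suff -> : t = t' by [].
  by apply/val_inj; move/(congr1 val): E => /=; apply: inj_map => x y [].
- move=> r; apply/orP; right; apply/existsP; exists t; by rewrite eqxx.
Qed.

Lemma dunion_char S (A B : structure S) R (t : (arity R).-tuple (carrier (dunion A B))) :
  srel t <-> (exists ta, t = map_tuple inl ta /\ srel ta) \/
             (exists tb, t = map_tuple inr tb /\ srel tb).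
Proof.
rewrite /=; split.
- by case/orP=> /existsP [t' /andP [/eqP E r]]; [left|right]; exists t'.
- case=> [[t' [E r]]|[t' [E r]]]; apply/orP; [left|right]; apply/existsP; exists t';
  by rewrite E eqxx.
Qed.

Lemma inl_inj' (A B : Type) : injective (@inl A B). Proof. by move=> x y []. Qed.
Lemma inr_inj' (A B : Type) : injective (@inr A B). Proof. by move=> x y []. Qed.

Theorem proposition3p5 (S : signature) (C K : sclass S) :
  (exists A, C A) -> (exists B, K B) ->
  (MSO_orderable (class_union C K) <-> MSO_orderable C /\ MSO_orderable K) /\
  (MSO_orderable (class_sum C K) <-> MSO_orderable C /\ MSO_orderable K).
Proof.
move=> [A0 CA0] [B0 KB0].
have FFfv : fv1 (FF S) = [::] /\ fv2 (FF S) = [::] by [].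
have TTfv : fv1 (TT S) = [::] /\ fv2 (TT S) = [::] by [].
split; split.
- move=> [phi [n [hf Hd]]]; split; exists phi, n; split=> // A HA ne.
    by apply: Hd => //; left.
  by apply: Hd => //; right.
- move=> [[phi1 [n1 [hf1 Hd1]]] [phi2 [n2 [hf2 Hd2]]]].
  exists (Comb (FF S) phi1 n1 phi2), (cc S + n1 + n2); split.
    by apply: Comb_free.
  move=> A [HA|HA] ne.
  + have [Ps1 L1] := get_order Hd1 HA.
    apply: (@comb_exists S A A (emptyS S) id (fun x => match x with end) (FF S) False
              phi1 n1 phi2 n2 Ps1 [::]) => //.
    * by move=> d; left; exists d.
    * by move=> R t _; rewrite id_rel.
    * by move=> R t; apply: emptyS_rel.
    * by move=> w W; rewrite sat_FF.
    * by right; left; case.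
  + have [Ps2 L2] := get_order Hd2 HA.
    apply: (@comb_exists S A (emptyS S) A (fun x => match x with end) id (FF S) False
              phi1 n1 phi2 n2 [::] Ps2) => //.
    * by move=> d; right; exists d.
    * by move=> R t; apply: emptyS_rel.
    * by move=> R t _; rewrite id_rel.
    * by move=> w W; rewrite sat_FF.
    * by right; right; case.
- move=> [phi [n [hf Hd]]]; split.
  + exists (Sel B0 phi n), (n + #|(n.-tuple {set carrier B0} : finType)|); split.
      exact: Sel_free.
    move=> A HA [a _].
    have [PsD [_ LD]] := Hd (dunion A B0) (ex_intro _ A (ex_intro _ B0 (conj HA (conj KB0 erefl))))
                          (ex_intro _ (inl a) I).
    apply: (@sum_restrict S (dunion A B0) A B0 inl inr phi n) => //.
    * exact: inl_inj'.
    * exact: inr_inj'.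
    * by move=> d; case: d => [x|y]; [left; exists x|right; exists y].
    * exact: dunion_char.
    * exact: LD.
  + exists (Sel A0 phi n), (n + #|(n.-tuple {set carrier A0} : finType)|); split.
      exact: Sel_free.
    move=> B HB [b _].
    have [PsD [_ LD]] := Hd (dunion A0 B) (ex_intro _ A0 (ex_intro _ B (conj CA0 (conj HB erefl))))
                          (ex_intro _ (inr b) I).
    apply: (@sum_restrict S (dunion A0 B) B A0 inr inl phi n) => //.
    * exact: inr_inj'.
    * exact: inl_inj'.
    * by move=> d; case: d => [x|y]; [right; exists x|left; exists y].
    * by move=> R t; rewrite dunion_char; split; case; auto.
    * exact: LD.
- move=> [[phi1 [n1 [hf1 Hd1]]] [phi2 [n2 [hf2 Hd2]]]].
  exists (Comb (TT S) phi1 n1 phi2), (cc S + n1 + n2); split.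
    by apply: Comb_free.
  move=> X [A [B [HA [HB ->]]]] ne.
  have [Ps1 L1] := get_order Hd1 HA.
  have [Ps2 L2] := get_order Hd2 HB.
  apply: (@comb_exists S (dunion A B) A B inl inr (TT S) True
              phi1 n1 phi2 n2 Ps1 Ps2) => //.
  * exact: inl_inj'.
  * exact: inr_inj'.
  * by move=> d; case: d => [x|y]; [left; exists x|right; exists y].
  * by move=> R t; apply: inl_rel.
  * by move=> R t; apply: inr_rel.
  * by move=> w W; rewrite sat_TT.
  * by left.
Qed.
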